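(* For any discrete random variable $X$, there exists a conditional distribution $p_{W|X}$ such that the resulting random variable $W$ has marginal distribution $\mathrm{Geom}(1/2)$ (i.e., $\mathbb{P}(W=w)=2^{-w}$ for $w=1,2,\dots$), and the conditional distribution $p_{X|W=w}$ is a dyadic distribution for all $w\ge1$.
   Context: A dyadic distribution is a probability distribution $p$ on a discrete set in which each nonzero probability $p(x)$ is an integer power of two. *)

(* Defs.v *)
From Stdlib Require Import Reals ZArith.
From Coquelicot Require Import Coquelicot.
Open Scope R_scope.

Definition is_pmf (p : nat -> R) : Prop :=
  (forall x, 0 <= p x) /\ is_series p 1.

Definition dyadic (p : nat -> R) : Prop :=
  forall x, p x <> 0 -> exists k : Z, p x = powerRZ 2 k.

(* A conditional distribution p_{W|X} with W taking values in {1,2,...}: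
   for each x, q x is a pmf on nat with no mass at 0. *)
Definition is_cond_dist_pos (q : nat -> nat -> R) : Prop :=
  forall x, is_pmf (q x) /\ q x 0%nat = 0.

Definition joint (p : nat -> R) (q : nat -> nat -> R) (x w : nat) : R := p x * q x w.

(* Main.v *)
Require Import Defs.
From Stdlib Require Import Reals ZArith Lra Lia.
From Stdlib Require Import ClassicalEpsilon Classical.
From Coquelicot Require Import Coquelicot.
Open Scope R_scope.

Fixpoint rsum (f : nat -> R) (N : nat) : R :=
  match N with O => 0 | S n => rsum f n + f n end.

Lemma sum_n_rsum a n : sum_n a n = rsum a (S n).
Proof.
  induction n.
  - rewrite sum_O. simpl. lra.
  - rewrite sum_Sn, IHn. simpl. unfold plus; simpl. reflexivity.
Qed.

Lemma rsum_ext f g N : (forall x, (x < N)%nat -> f x = g x) -> rsum f N = rsum g N.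
Proof. induction N; intros H; simpl; auto. rewrite IHN; [rewrite H|]; auto; intros; apply H; lia. Qed.

Lemma rsum_plus f g N : rsum (fun x => f x + g x) N = rsum f N + rsum g N.
Proof. induction N; simpl; try rewrite IHN; lra. Qed.

Lemma rsum_minus f g N : rsum (fun x => f x - g x) N = rsum f N - rsum g N.
Proof. induction N; simpl; try rewrite IHN; lra. Qed.

Lemma rsum_nonneg f N : (forall x, 0 <= f x) -> 0 <= rsum f N.
Proof. intros H; induction N; simpl; [lra|]. specialize (H N). lra. Qed.

Lemma rsum_mono f N M : (forall x, 0 <= f x) -> (N <= M)%nat -> rsum f N <= rsum f M.
Proof. intros H HM; induction HM; simpl; [lra|]. specialize (H m). lra. Qed.

Lemma rsum_ge_term f N x : (forall x, 0 <= f x) -> (x < N)%nat -> f x <= rsum f N.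
Proof.
  intros H Hx. apply Rle_trans with (rsum f (S x)).
  - simpl. pose proof (rsum_nonneg f x H). lra.
  - apply rsum_mono; auto.
Qed.

Lemma rsum_single f x0 N : (x0 < N)%nat ->
  rsum (fun x => if Nat.eqb x x0 then f x else 0) N = f x0.
Proof.
  induction N; intros H; [lia|]. simpl.
  destruct (Nat.eqb N x0) eqn:E.
  - apply Nat.eqb_eq in E; subst.
    rewrite (rsum_ext _ (fun _ => 0)).
    + clear. assert (forall n, rsum (fun _ => 0) n = 0) by (induction n; simpl; lra).
      rewrite H. lra.
    + intros x Hx. destruct (Nat.eqb x x0) eqn:E; auto. apply Nat.eqb_eq in E; lia.
  - apply Nat.eqb_neq in E. rewrite IHN; [lra|lia].
Qed.

Lemma rsum_pos_ex f N : 0 < rsum f N -> exists x, (x < N)%nat /\ f x <> 0.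
Proof.
  induction N; simpl; intros H; [lra|].
  destruct (Req_dec (f N) 0) as [E|E].
  - destruct IHN as [x [Hx Hf]]; [lra|]. exists x; split; auto.
  - exists N; split; auto.
Qed.

Lemma sel : forall j (c : R), 0 < c -> forall N (a : nat -> R),
  (forall x, (x < N)%nat -> a x = 0 \/ exists e, (e <= j)%nat /\ a x = c * 2^e) ->
  c * 2^j <= rsum a N ->
  exists s : nat -> bool, rsum (fun x => if s x then a x else 0) N = c * 2^j.
Proof.
  induction j; intros c Hc N a Ha Hs.
  - destruct (rsum_pos_ex a N) as [x [Hx Hax]]; [simpl in Hs; lra|].
    exists (fun y => Nat.eqb y x). rewrite rsum_single; auto.
    destruct (Ha x Hx) as [E|[e [He E]]]; [contradiction|].
    assert (e = 0%nat) by lia. subst. exact E.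
  - destruct (classic (exists x, (x < N)%nat /\ a x = c * 2^(S j))) as [[x [Hx E]]|Hn].
    + exists (fun y => Nat.eqb y x). rewrite rsum_single; auto.
    + assert (Ha' : forall x, (x < N)%nat -> a x = 0 \/ exists e, (e <= j)%nat /\ a x = c * 2^e).
      { intros x Hx. destruct (Ha x Hx) as [E|[e [He E]]]; [auto|].
        right. exists e. split; auto.
        destruct (Nat.eq_dec e (S j)); [|lia]. subst. exfalso; apply Hn; eauto. }
      assert (H2 : 0 < 2 ^ j) by (apply pow_lt; lra).
      assert (Hj : c * 2 ^ S j = 2 * (c * 2^j)) by (simpl; ring).
      destruct (IHj c Hc N a Ha') as [s1 Hs1]; [rewrite Hj in Hs; nra|].
      set (a' := fun x => if s1 x then 0 else a x).
      assert (Ea' : rsum a' N = rsum a N - c * 2^j).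
      { rewrite <- Hs1, <- rsum_minus. apply rsum_ext. intros x _. unfold a'.
        destruct (s1 x); ring. }
      destruct (IHj c Hc N a') as [s2 Hs2].
      { intros x Hx. unfold a'. destruct (s1 x); auto. }
      { rewrite Ea'. rewrite Hj in Hs. nra. }
      exists (fun x => orb (s1 x) (s2 x)).
      rewrite (rsum_ext _ (fun x => (if s1 x then a x else 0) + (if s2 x then a' x else 0))).
      * rewrite rsum_plus, Hs1, Hs2, Hj. ring.
      * intros x _. unfold a'. destruct (s1 x), (s2 x); simpl; ring.
Qed.

Lemma series_approx a l : is_series a l -> forall eps, 0 < eps ->
  exists N, forall n, (n >= N)%nat -> Rabs (rsum a (S n) - l) < eps.
Proof.
  intros H eps He. assert (H' : is_lim_seq (sum_n a) l) by exact H.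
  apply is_lim_seq_spec in H'. destruct (H' (mkposreal eps He)) as [N HN].
  exists N. intros n Hn. rewrite <- sum_n_rsum. apply HN. auto.
Qed.

Lemma series_partial_le a l : (forall x, 0 <= a x) -> is_series a l -> forall N, rsum a N <= l.
Proof.
  intros Hp H N. destruct (Rle_lt_dec (rsum a N) l) as [|Hl]; auto.
  destruct (series_approx a l H (rsum a N - l)) as [M HM]; [lra|].
  specialize (HM (N + M)%nat ltac:(lia)).
  assert (rsum a N <= rsum a (S (N + M))) by (apply rsum_mono; auto; lia).
  apply Rabs_def2 in HM. lra.
Qed.

Lemma finite_series d N T : (forall x, (N <= x)%nat -> d x = 0) -> rsum d N = T -> is_series d T.
Proof.
  intros Hz Hs. unfold is_series.
  apply filterlim_ext_loc with (fun _ => T); [|apply filterlim_const].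
  exists N. intros n Hn. rewrite sum_n_rsum, <- Hs.
  induction Hn; simpl in *.
  - rewrite (Hz N); auto. ring.
  - rewrite (Hz (S m)); [lra|lia].
Qed.

Lemma pow_bracket p : 0 < p < 1 -> exists k, /2^k <= p < 2 * /2^k.
Proof.
  intros Hp.
  assert (Hn : exists n, /2^n <= p).
  { destruct (pow_lt_1_zero (/2) ltac:(rewrite Rabs_pos_eq; lra) p ltac:(lra)) as [N HN].
    exists N. specialize (HN N ltac:(lia)). rewrite pow_inv, Rabs_pos_eq in HN; [lra|].
    apply Rlt_le, Rinv_0_lt_compat, pow_lt; lra. }
  destruct Hn as [n Hn]. induction n.
  - simpl in Hn. lra.
  - destruct (Rle_lt_dec (/2^n) p) as [H|H]; auto.
    exists (S n). split; auto. simpl. rewrite Rinv_mult.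
    assert (0 < 2^n) by (apply pow_lt; lra).
    replace (2 * (/ 2 * / 2 ^ n)) with (/ 2 ^ n) by (field; lra). lra.
Qed.

Lemma choice_fun {A B : Type} (P : A -> B -> Prop) :
  (forall a, exists b, P a b) -> exists f, forall a, P a (f a).
Proof.
  intros H. exists (fun a => proj1_sig (constructive_indefinite_description _ (H a))).
  intros a. apply proj2_sig.
Qed.

Lemma pow2_pos n : 0 < 2 ^ n.
Proof. apply pow_lt; lra. Qed.

Lemma inv_pow_anti a b : (a <= b)%nat -> /2^b <= /2^a.
Proof.
  intros H. apply Rinv_le_contravar; [apply pow2_pos|]. apply Rle_pow; [lra|auto].
Qed.

Lemma inv_pow_id k K : (k <= K)%nat -> /2^K * 2^(K-k) = /2^k.
Proof.
  intros H. replace K with (k + (K - k))%nat at 1 by lia. rewrite pow_add.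
  pose proof (pow2_pos k). pose proof (pow2_pos (K-k)). field. lra.
Qed.

Lemma gexists m p : 0 <= p -> exists y, 0 <= y <= p /\
  (y = 0 \/ exists k, y = /2^k /\ (S m <= k)%nat) /\
  (/2^(S m) <= p -> y = /2^(S m)) /\ (0 < p < /2^(S m) -> p < 2*y).
Proof.
  intros Hp. pose proof (pow2_pos (S m)).
  assert (Hi : 0 < /2^(S m)) by (apply Rinv_0_lt_compat; auto).
  destruct (Rle_lt_dec (/2^(S m)) p) as [H1|H1].
  - exists (/2^(S m)). split; [lra|]. split; [right; exists (S m); auto|].
    split; auto. intros; lra.
  - destruct (Req_dec p 0) as [H0|H0].
    + exists 0. split; [lra|]. split; auto. split; intros; lra.
    + assert (Hh : /2^(S m) <= /2^1) by (apply inv_pow_anti; lia). replace (2^1) with 2 in Hh by ring.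
      assert (0 < p) by (destruct Hp as [Hp|Hp]; [auto|exfalso; auto]).
      destruct (pow_bracket p) as [k Hk]; [lra|].
      exists (/2^k). assert (0 < /2^k) by (apply Rinv_0_lt_compat, pow2_pos).
      split; [lra|]. split; [|split; intros; lra].
      right. exists k. split; auto.
      destruct (le_lt_dec (S m) k) as [|Hl]; auto.
      assert (/2^(S m) <= /2^k) by (apply inv_pow_anti; lia). lra.
Qed.

Lemma rsum_lin g r N : rsum (fun x => 2 * g x - r x) N = 2 * rsum g N - rsum r N.
Proof. induction N; simpl; try rewrite IHN; ring. Qed.

Lemma K r m : (forall x, 0 <= r x) -> is_series r (/2^m) ->
  exists d, (forall x, 0 <= d x <= r x) /\ is_series d (/2^(S m)) /\
    (forall x, d x <> 0 -> exists k, d x = /2^k /\ (S m <= k)%nat).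
Proof.
  intros Hr Hs.
  destruct (choice_fun (fun x y => 0 <= y <= r x /\
    (y = 0 \/ exists k, y = /2^k /\ (S m <= k)%nat) /\
    (/2^(S m) <= r x -> y = /2^(S m)) /\ (0 < r x < /2^(S m) -> r x < 2*y)))
    as [g Hg].
  { intros x. apply gexists. auto. }
  assert (Hg0 : forall x, 0 <= g x) by (intros x; destruct (Hg x) as [? _]; lra).
  pose proof (pow2_pos m) as Pm.
  assert (HSm : /2^(S m) = /2^m / 2) by (simpl; field; lra).
  assert (Pi : 0 < /2^m) by (apply Rinv_0_lt_compat; auto).
  assert (HN : exists N, /2^(S m) <= rsum g N).
  { destruct (classic (exists x0, /2^(S m) <= r x0)) as [[x0 Hx0]|HB].
    - exists (S x0). destruct (Hg x0) as [_ [_ [HA _]]]. rewrite <- (HA Hx0).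
      apply rsum_ge_term; auto.
    - assert (HB' : forall x, r x < /2^(S m)).
      { intros x. destruct (Rlt_le_dec (r x) (/2^(S m))); auto. exfalso; eauto. }
      destruct (series_approx r _ Hs (/2^(S m))) as [N1 HN1]; [lra|].
      specialize (HN1 N1 ltac:(lia)). apply Rabs_def2 in HN1.
      destruct (rsum_pos_ex r (S N1)) as [x0 [Hx0 Hrx0]]; [lra|].
      assert (Hrp : 0 < r x0) by (specialize (Hr x0); lra).
      set (c := 2 * g x0 - r x0).
      assert (Hc : 0 < c).
      { unfold c. destruct (Hg x0) as [_ [_ [_ HBB]]]. specialize (HB' x0). 
        specialize (HBB (conj Hrp HB')). lra. }
      destruct (series_approx r _ Hs c) as [N2 HN2]; [lra|].
      specialize (HN2 N2 ltac:(lia)). apply Rabs_def2 in HN2.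
      exists (S (N1 + N2)).
      assert (Hh : forall x, 0 <= 2 * g x - r x).
      { intros x. destruct (Hg x) as [Hgx [_ [_ HBB]]].
        destruct (Req_dec (r x) 0) as [E|E]; [lra|].
        assert (0 < r x) by (specialize (Hr x); lra).
        specialize (HBB (conj H (HB' x))). lra. }
      pose proof (rsum_ge_term _ (S (N1 + N2)) x0 Hh ltac:(lia)) as T1.
      rewrite rsum_lin in T1. fold c in T1.
      assert (rsum r (S N2) <= rsum r (S (N1 + N2))) by (apply rsum_mono; auto; lia).
      lra. }
  destruct HN as [N HN].
  assert (HK : exists K, (S m <= K)%nat /\ forall x, (x < N)%nat ->
     g x = 0 \/ exists k, g x = /2^k /\ (S m <= k)%nat /\ (k <= K)%nat).
  { clear HN. induction N.
    - exists (S m). split; auto. intros; lia.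
    - destruct IHN as [K [HK1 HK2]].
      destruct (Hg N) as [_ [[E|[k [E Hk]]] _]].
      + exists K. split; auto. intros x Hx. destruct (Nat.eq_dec x N); [subst; auto|].
        apply HK2; lia.
      + exists (Nat.max K k). split; [lia|]. intros x Hx.
        destruct (Nat.eq_dec x N); [subst; right; exists k; split; auto; lia|].
        destruct (HK2 x ltac:(lia)) as [|[k' Hk']]; auto. right; exists k'; destruct Hk' as [? [? ?]]; repeat split; auto; lia. }
  destruct HK as [K [HK1 HK2]].
  destruct (sel (K - S m) (/2^K) ltac:(apply Rinv_0_lt_compat, pow2_pos) N g) as [s Hsel].
  { intros x Hx. destruct (HK2 x Hx) as [|[k [E Hk]]]; auto. right.
    exists (K - k)%nat. split; [lia|]. rewrite inv_pow_id; auto. lia. }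
  { rewrite inv_pow_id; auto. }
  rewrite inv_pow_id in Hsel; auto.
  exists (fun x => if Nat.ltb x N then (if s x then g x else 0) else 0).
  split; [|split].
  - intros x. destruct (Hg x) as [? _]. destruct (Nat.ltb x N), (s x); lra.
  - apply finite_series with N.
    + intros x Hx. destruct (Nat.ltb x N) eqn:E; auto. apply Nat.ltb_lt in E; lia.
    + rewrite <- Hsel. apply rsum_ext. intros x Hx. apply Nat.ltb_lt in Hx. rewrite Hx. auto.
  - intros x Hx. destruct (Nat.ltb x N); [|lra]. destruct (s x); [|lra].
    destruct (Hg x) as [_ [[E|[k E]] _]]; [contradiction|]. exists k; auto.
Qed.

Fixpoint remf (F : (nat -> R) * nat -> nat -> R) (p : nat -> R) (w : nat) : nat -> R :=
  match w with
  | O => p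
  | S w' => fun x => remf F p w' x - F (remf F p w', w') x
  end.

Lemma series_shift (a : nat -> R) (l : R) : is_series a l ->
  is_series (fun w => match w with O => 0 | S w' => a w' end) l.
Proof.
  intros H. apply is_series_decr_1. unfold plus, opp; simpl.
  replace (l + - 0) with l by ring. exact H.
Qed.

Theorem lemma1 (pX : nat -> R) (HpX : is_pmf pX) :
  exists q : nat -> nat -> R,
    is_cond_dist_pos q /\
    (forall w : nat, (1 <= w)%nat -> is_series (fun x => joint pX q x w) (/ 2 ^ w)) /\
    (forall w : nat, (1 <= w)%nat -> dyadic (fun x => joint pX q x w / (/ 2 ^ w))).
Proof.
  destruct HpX as [Hp0 Hp1].
  destruct (choice_fun (fun (rm : (nat -> R) * nat) d =>
     (forall x, 0 <= fst rm x) -> is_series (fst rm) (/2^(snd rm)) ->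
     (forall x, 0 <= d x <= fst rm x) /\ is_series d (/2^(S (snd rm))) /\
     (forall x, d x <> 0 -> exists k, d x = /2^k /\ (S (snd rm) <= k)%nat))) as [F HF].
  { intros [r m]. simpl.
    destruct (classic ((forall x, 0 <= r x) /\ is_series r (/2^m))) as [[H1 H2]|Hn].
    - destruct (K r m H1 H2) as [d Hd]. exists d. auto.
    - exists (fun _ => 0). intros H1 H2. exfalso; auto. }
  set (rem := remf F pX).
  set (d := fun w => F (rem w, w)).
  assert (Hinv : forall w, (forall x, 0 <= rem w x) /\ is_series (rem w) (/2^w)).
  { induction w.
    - simpl. split; auto. replace (/ 1) with 1 by field. exact Hp1.
    - destruct IHw as [I1 I2]. destruct (HF (rem w, w) I1 I2) as [D1 [D2 D3]]. simpl in *.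
      split.
      + intros x. unfold rem; simpl. fold rem. specialize (D1 x). lra.
      + pose proof (is_series_minus _ _ _ _ I2 D2) as HM.
        replace (/ (2 * 2^w)) with (plus (/2^w) (opp (/ (2 * 2^w)))).
        * unfold rem; simpl. fold rem. exact HM.
        * unfold plus, opp; simpl. pose proof (pow2_pos w). field. lra. }
  assert (Hd : forall w, (forall x, 0 <= d w x <= rem w x) /\ is_series (d w) (/2^(S w)) /\
     (forall x, d w x <> 0 -> exists k, d w x = /2^k /\ (S w <= k)%nat)).
  { intros w. destruct (Hinv w) as [I1 I2]. exact (HF (rem w, w) I1 I2). }
  assert (Hrem_le : forall w x, rem w x <= pX x).
  { induction w; intros x; unfold rem; simpl; fold rem; [lra|].
    destruct (Hd w) as [D1 _]. specialize (D1 x). specialize (IHw x). unfold d in D1. lra. }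
  assert (Hrem_pow : forall w x, rem w x <= /2^w).
  { intros w x. destruct (Hinv w) as [I1 I2].
    apply Rle_trans with (rsum (rem w) (S x)).
    - apply rsum_ge_term; auto.
    - apply series_partial_le; auto. }
  assert (Htel : forall x n, sum_n (fun w => d w x) n = pX x - rem (S n) x).
  { intros x n. induction n.
    - rewrite sum_O. unfold d, rem; simpl. ring.
    - rewrite sum_Sn, IHn. unfold plus; simpl. unfold d, rem; simpl. ring. }
  assert (Hsx : forall x, is_series (fun w => d w x) (pX x)).
  { intros x. assert (H : is_lim_seq (sum_n (fun w => d w x)) (pX x)).
    { apply is_lim_seq_ext with (fun n => pX x - rem (S n) x).
      - intros n. rewrite Htel. auto.
      - replace (Finite (pX x)) with (Finite (pX x - 0)) by (f_equal; ring). apply is_lim_seq_minus'.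
        + apply is_lim_seq_const.
        + apply is_lim_seq_le_le with (fun _ => 0) (fun n => (/2)^n).
          * intros n. split; [apply (Hinv (S n))|]. rewrite pow_inv.
            apply Rle_trans with (/2^(S n)); [apply Hrem_pow|apply inv_pow_anti; lia].
          * apply is_lim_seq_const.
          * apply is_lim_seq_geom. rewrite Rabs_pos_eq; lra. }
    exact H. }
  assert (Hdp : forall w x, pX x = 0 -> d w x = 0).
  { intros w x E. destruct (Hd w) as [D1 _]. specialize (D1 x). specialize (Hrem_le w x). lra. }
  exists (fun x w => match w with O => 0 | S w' =>
            if Req_dec_T (pX x) 0 then /2^(S w') else d w' x / pX x end).
  assert (Hj : forall x w, joint pX (fun x w => match w with O => 0 | S w' =>
            if Req_dec_T (pX x) 0 then /2^(S w') else d w' x / pX x end) x (S w) = d w x).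
  { intros x w. unfold joint. destruct (Req_dec_T (pX x) 0) as [E|E].
    - rewrite E, Hdp; auto. ring.
    - field. auto. }
  split; [|split].
  - intros x. split; [split|auto].
    + intros [|w]; [lra|]. destruct (Req_dec_T (pX x) 0) as [E|E].
      * apply Rlt_le, Rinv_0_lt_compat, pow2_pos.
      * destruct (Hd w) as [D1 _]. specialize (D1 x). specialize (Hp0 x).
        apply Rmult_le_pos; [lra|]. apply Rlt_le, Rinv_0_lt_compat.
        destruct Hp0 as [|E']; auto. exfalso; auto.
    + apply series_shift. destruct (Req_dec_T (pX x) 0) as [E|E].
      * pose proof (is_series_scal (/2) _ _ (is_series_geom (/2) ltac:(rewrite Rabs_pos_eq; lra))) as G.
        eapply is_series_ext; [|replace 1 with (scal (/2) (/ (1 - /2))); [exact G|]].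
        -- intros n. unfold scal; simpl; unfold mult; simpl. rewrite pow_inv. field.
           apply pow_nonzero. lra.
        -- unfold scal; simpl; unfold mult; simpl. field.
      * pose proof (is_series_scal (/ pX x) _ _ (Hsx x)) as G.
        eapply is_series_ext; [|replace 1 with (scal (/ pX x) (pX x)); [exact G|]].
        -- intros n. unfold scal; simpl; unfold mult; simpl. unfold Rdiv. ring.
        -- unfold scal; simpl; unfold mult; simpl. field. auto.
  - intros [|w] Hw; [lia|]. eapply is_series_ext; [|apply (Hd w)].
    intros x. rewrite Hj. auto.
  - intros [|w] Hw; [lia|]. intros x Hx. simpl in Hx. rewrite Hj in *.
    assert (Hdx : d w x <> 0).
    { intros E. apply Hx. rewrite E. unfold Rdiv. ring. }
    destruct (Hd w) as [_ [_ D3]]. destruct (D3 x Hdx) as [k [E Hk]].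
    exists (- Z.of_nat (k - S w))%Z. rewrite powerRZ_neg', <- pow_powerRZ.
    rewrite E. replace k with (S w + (k - S w))%nat at 1 by lia. rewrite pow_add.
    pose proof (pow2_pos (S w)). pose proof (pow2_pos (k - S w)). field. lra.
Qed.
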